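(* Let $0\le\gamma\le1$ and $d\ge1$ with $\mathsf{err}(\gamma,d)>0$, and let $f\colon\{0,1\}^m\to\{0,1\}^n$ be a $d$-local function. Then there exist a set $S\subseteq[m]$ and a number $r$ with $$|S|\le\frac{\mathsf{err}(\gamma,d)^2\cdot r}{4}\quad\text{and}\quad r\ge n\cdot\left(\frac{\mathsf{err}(\gamma,d)^2}{16d}\right)^{2d+1}$$ such that for every fixing $\rho\in\{0,1\}^S$ of the input bits in $S$, the restricted function $f_\rho\colon\{0,1\}^{[m]\setminus S}\to\{0,1\}^n$ is $(d,r)$-local.
   Context: A function $f\colon\{0,1\}^m\to\{0,1\}^n$ is $d$-local if each output bit depends on at most $d$ input bits; $I_f(i)$ denotes the set of input coordinates on which output bit $i$ depends. Fixing the inputs in $S$ to $\rho$ yields $f_\rho(z')=f(\rho,z')$ for $z'\in\{0,1\}^{[m]\setminus S}$. Output bits $i_1,\dots,i_r$ of a function $g$ are non-connected if the sets $I_g(i_1),\dots,I_g(i_r)$ are pairwise disjoint. $g$ is $(d,r)$-local if it is $d$-local and has $r$ non-connected output bits. $\mathsf{err}(\gamma,t)$ is the minimum distance of $\gamma$ to an integer multiple of $2^{-t}$. *)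

(* Defs.v *)
From HB Require Import structures.
From mathcomp Require Import all_boot all_order all_algebra.
Set Implicit Arguments. Unset Strict Implicit. Unset Printing Implicit Defensive.
Import Order.TTheory GRing.Theory Num.Theory.

Definition flip (I : finType) (x : {ffun I -> bool}) (j : I) : {ffun I -> bool} :=
  [ffun k => if k == j then ~~ x k else x k].

Definition depends_on (I O : finType) (g : {ffun I -> bool} -> {ffun O -> bool})
  (o : O) (j : I) : bool :=
  [exists x, g (flip x j) o != g x o].

Definition Idep (I O : finType) (g : {ffun I -> bool} -> {ffun O -> bool}) (o : O)
  : {set I} := [set j | depends_on g o j].

Definition local (I O : finType) (d : nat) (g : {ffun I -> bool} -> {ffun O -> bool}) :=
  forall o : O, #|Idep g o| <= d.

Definition non_connected (I O : finType) (g : {ffun I -> bool} -> {ffun O -> bool})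
  (R : {set O}) :=
  forall o1 o2, o1 \in R -> o2 \in R -> o1 != o2 -> [disjoint Idep g o1 & Idep g o2].

Definition local_dr (I O : finType) (d r : nat) (g : {ffun I -> bool} -> {ffun O -> bool}) :=
  local d g /\ exists R : {set O}, #|R| = r /\ non_connected g R.

Definition merge (m : nat) (S : {set 'I_m})
  (rho : {ffun {j : 'I_m | j \in S} -> bool})
  (z : {ffun {j : 'I_m | j \notin S} -> bool}) : {ffun 'I_m -> bool} :=
  [ffun j => match @insub _ (fun j : 'I_m => j \in S) _ j with
             | Some k => rho k
             | None => match @insub _ (fun j : 'I_m => j \notin S) _ j with
                       | Some k => z k
                       | None => false
                       end
             end].

Definition restrict (m n : nat) (f : {ffun 'I_m -> bool} -> {ffun 'I_n -> bool})
  (S : {set 'I_m}) (rho : {ffun {j : 'I_m | j \in S} -> bool})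
  : {ffun {j : 'I_m | j \notin S} -> bool} -> {ffun 'I_n -> bool} :=
  fun z => f (merge rho z).

(* e = err(gamma, t): the minimum distance of gamma to an integer multiple of 2^-t *)
Definition is_err (R : realFieldType) (gamma : R) (t : nat) (e : R) : Prop :=
  ((exists k : int, e = `|gamma - k%:~R / 2%:R ^+ t|) /\
   forall k : int, e <= `|gamma - k%:~R / 2%:R ^+ t|)%R.

(* Main.v *)
Require Import Defs.
From HB Require Import structures.
From mathcomp Require Import all_boot all_order all_algebra.
From mathcomp Require Import zify ring lra.
Import Order.TTheory GRing.Theory Num.Theory.
Set Implicit Arguments. Unset Strict Implicit. Unset Printing Implicit Defensive.

Lemma card_sum (T : finType) (A : {set T}) : #|A| = \sum_x (x \in A : nat).
Proof. by rewrite -sum1_card big_mkcond. Qed.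

Lemma union_bound (T J : finType) (A : {set T}) (Js : {set J}) (B : J -> {set T}) :
  (forall x, x \in A -> exists2 j, j \in Js & x \in B j) ->
  (#|A| <= \sum_(j in Js) #|B j|)%N.
Proof.
move=> H; rewrite card_sum.
under [X in (_ <= X)%N]eq_bigr => j _ do rewrite card_sum.
rewrite exchange_big /=; apply: leq_sum => x _.
case xA: (x \in A) => //=.
have [j jJ xB] := H x xA.
by rewrite (bigD1 j) //= xB.
Qed.

Local Open Scope ring_scope.

Lemma greedy (R : realFieldType) (T : finType) (P : rel T) (De : R) :
  (forall x y, P x y -> P y x) ->
  forall G : {set T}, (forall o, o \in G -> #|[set o' in G | P o o']|%:R + 1 <= De) ->
  exists I : {set T}, [/\ I \subset G,
     (forall x y, x \in I -> y \in I -> x != y -> ~~ P x y) &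
     #|G|%:R <= De * #|I|%:R].
Proof.
move=> Psym G.
elim: {G}_.+1 {-2}G (ltnSn #|G|) => // N IH G HG Hdeg.
have [->|[o oG]] := set_0Vmem G.
  by exists set0; rewrite sub0set cards0 mulr0; split=> // x y; rewrite in_set0.
set Nb := o |: [set o' in G | P o o'].
set G' := G :\: Nb.
have ltG : (#|G'| < #|G|)%N.
  by rewrite /G' (cardsD1 o G) oG ltnS subset_leq_card // ; apply/subsetP=> x;
     rewrite !inE; case/andP=> /norP[-> _] ->.
have Hdeg' : forall o', o' \in G' -> #|[set o'' in G' | P o' o'']|%:R + 1 <= De.
  move=> o' o'G; apply: le_trans (Hdeg o' _); last first.
    by move: o'G; rewrite inE => /andP[].
  rewrite lerD2r ler_nat; apply: subset_leq_card; apply/subsetP=> x.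
  by rewrite !inE => /andP[/andP[_ ->] ->].
have [I' [sI' hI' cI']] := IH G' (leq_trans ltG HG) Hdeg'.
have oI' : o \notin I'.
  by apply/negP=> /(subsetP sI'); rewrite !inE eqxx.
exists (o |: I'); split.
- by rewrite subUset sub1set oG (subset_trans sI') // subsetDl.
- have key : forall y, y \in I' -> ~~ P o y.
    move=> y /(subsetP sI'); rewrite !inE => /andP[/norP[_ /negP H] yG].
    by apply/negP=> Poy; apply: H; rewrite yG Poy.
  move=> x y; rewrite !inE => /orP[/eqP->|xI] /orP[/eqP->|yI]; rewrite ?eqxx //.
  + by move=> _; exact: key.
  + by move=> _; apply/negP=> /Psym; apply/negP; exact: key.
  + by move=> /hI'; apply.
- rewrite cardsU1 oI' natrD mulrDr mulr1 -(cardsID Nb G) natrD.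
  apply: lerD; last exact: cI'.
  apply: le_trans (Hdeg o oG); rewrite addrC.
  have -> : G :&: Nb = o |: [set o' in G | P o o'].
    by apply/setP=> x; rewrite !inE; case: eqP => [->|] //=; rewrite ?oG //; case: (x \in G).
  rewrite cardsU1 natrD lerD2r.
  by case: (_ \notin _); rewrite ?ler01.
Qed.

Lemma merge_flip (m : nat) (S : {set 'I_m}) (rho : {ffun {j : 'I_m | j \in S} -> bool}) (z : {ffun {j : 'I_m | j \notin S} -> bool}) j :
  Defs.merge rho (flip z j) = flip (Defs.merge rho z) (val j).
Proof.
apply/ffunP=> i; rewrite /Defs.merge /flip !ffunE.
case: insubP => [k kS ik|iS].
  have: i != val j by apply/eqP=> ij; move: (valP j); rewrite -ij kS.
  by move/negbTE->.
case: insubP => [k kS ik|]; last by rewrite iS.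
by rewrite ffunE -ik.
Qed.

Lemma dep_restrict (m n : nat) (f : {ffun 'I_m -> bool} -> {ffun 'I_n -> bool}) (S : {set 'I_m}) (rho : {ffun {j : 'I_m | j \in S} -> bool}) o j :
  depends_on (restrict f rho) o j -> depends_on f o (val j).
Proof.
case/existsP=> z H; apply/existsP; exists (Defs.merge rho z).
by rewrite /restrict merge_flip in H.
Qed.

Lemma Idep_restrict (m n : nat) (f : {ffun 'I_m -> bool} -> {ffun 'I_n -> bool}) (S : {set 'I_m})
  (rho : {ffun {j : 'I_m | j \in S} -> bool}) o j :
  j \in Idep (restrict f rho) o -> val j \in Idep f o :\: S.
Proof.
rewrite !inE => /dep_restrict ->; by rewrite (valP j).
Qed.

Lemma local_restrict (m n d : nat) (f : {ffun 'I_m -> bool} -> {ffun 'I_n -> bool}) (S : {set 'I_m})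
  (rho : {ffun {j : 'I_m | j \in S} -> bool}) :
  local d f -> local d (restrict f rho).
Proof.
move=> H o; apply: leq_trans (H o).
rewrite -(card_imset _ val_inj); apply: subset_leq_card; apply/subsetP=> x.
case/imsetP=> j jI ->; move: (Idep_restrict jI); rewrite inE; by case/andP.
Qed.

Section Comb.
Variables (R : realFieldType) (m n d : nat) (f : {ffun 'I_m -> bool} -> {ffun 'I_n -> bool}) (q : R).
Hypotheses (q1 : 1 <= q) (d1 : (1 <= d)%N) (loc : local d f).

Definition fan j := #|[set o | j \in Idep f o]|.
Definition band k j := (q ^+ k <= (fan j)%:R) && ((fan j)%:R < q ^+ k.+1).
Definition bad k o := [exists j in Idep f o, band k j].

Lemma sum_fan_le : (\sum_j fan j <= n * d)%N.
Proof.
rewrite /fan.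
under eq_bigr => j _ do rewrite card_sum.
rewrite exchange_big /=.
apply: (@leq_trans (\sum_(o < n) d)); last by rewrite sum_nat_const card_ord.
apply: leq_sum => o _; rewrite (leq_trans _ (loc o)) // card_sum.
by apply: leq_sum => j _; rewrite !inE.
Qed.

Lemma band_le1 j : (#|[set k : 'I_d.+1 | band k j]| <= 1)%N.
Proof.
apply/card_le1_eqP => k k'; rewrite !inE.
wlog lt : k k' / (k <= k')%N.
  move=> W hk hk'; case: (leqP k k') => h; first exact: W.
  by apply/esym; apply: W => //; apply: ltnW.
move=> /andP[_ h1] /andP[h2 _]; apply: val_inj; apply/eqP; rewrite eqn_leq lt andbT.
rewrite leqNgt; apply/negP => kk.
have := lt_le_trans h1 (le_trans (ler_weXn2l q1 kk) h2).
by rewrite ltxx.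
Qed.

Lemma sum_bad : (\sum_(k < d.+1) #|[set o | bad k o]| <= n * d)%N.
Proof.
under eq_bigr => k _ do rewrite card_sum.
rewrite exchange_big /=.
apply: (@leq_trans (\sum_(o < n) d)); last by rewrite sum_nat_const card_ord.
apply: leq_sum => o _.
have -> : (\sum_(k < d.+1) (o \in [set o0 | bad k o0] : nat))
   = #|[set k : 'I_d.+1 | bad k o]|.
  by rewrite card_sum; apply: eq_bigr => k _; rewrite !inE.
apply: leq_trans (loc o).
apply: (@leq_trans (\sum_(j in Idep f o) #|[set k : 'I_d.+1 | band k j]|)).
  apply: union_bound => k; rewrite inE => /existsP[j /andP[jD hb]].
  by exists j; rewrite // inE.
rewrite -sum1_card; apply: leq_sum => j _; exact: band_le1.
Qed.

Lemma exists_good : exists k : 'I_d.+1, (n <= d.+1 * #|[set o | ~~ bad k o]|)%N.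
Proof.
pose k := [arg min_(k < (ord0 : 'I_d.+1)) #|[set o | bad k o]|].
exists k.
have hk : (d.+1 * #|[set o | bad k o]| <= n * d)%N.
  apply: leq_trans sum_bad.
  rewrite /k; case: arg_minnP => // i _ H.
  rewrite -[X in (X * _)%N](card_ord d.+1) -sum_nat_const.
  by apply: leq_sum => j _; apply: H.
have hc : (#|[set o | ~~ bad k o]| + #|[set o | bad k o]| = n)%N.
  rewrite -[X in _ = X](card_ord n) -(cardsC [set o | bad k o]) addnC.
  by congr (_ + _)%N; apply: eq_card => o; rewrite !inE.
nia.
Qed.


Local Open Scope ring_scope.

Lemma comb : exists (S : {set 'I_m}) (r k : nat),
  [/\ (k <= d)%N, #|S|%:R * q ^+ k.+1 <= (n * d)%:R,
      n%:R <= (d.+1)%:R * (1 + d%:R * q ^+ k) * r%:R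
    & forall rho : {ffun {j : 'I_m | j \in S} -> bool}, local_dr d r (restrict f rho)].
Proof.
have [k hk] := exists_good.
pose S := [set j | q ^+ k.+1 <= (fan j)%:R].
pose G := [set o | ~~ bad k o].
pose P := fun o o' => ~~ [disjoint Idep f o :\: S & Idep f o' :\: S].
have Psym : forall x y, P x y -> P y x by move=> x y; rewrite /P disjoint_sym.
pose De : R := 1 + d%:R * q ^+ k.
have Hdeg : forall o, o \in G -> #|[set o' in G | P o o']|%:R + 1 <= De.
  move=> o oG; rewrite addrC /De lerD2l.
  apply: (@le_trans _ _ (\sum_(j in Idep f o :\: S) (fan j)%:R)).
    rewrite -natr_sum ler_nat; apply: union_bound => o'.
    rewrite !inE => /andP[_]; rewrite /P -setI_eq0 => /set0Pn[j].
    rewrite !inE => /andP[/andP[jS jo] /andP[_ jo']].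
    by exists j; rewrite ?inE ?jS ?jo ?jo'.
  apply: (@le_trans _ _ (\sum_(j in Idep f o :\: S) q ^+ k)).
    apply: ler_sum => j; rewrite !inE => /andP[jS jo].
    move: oG; rewrite inE /bad negb_exists => /forallP/(_ j); rewrite inE jo /= /band.
    rewrite -ltNge in jS; rewrite jS andbT -ltNge; exact: ltW.
  rewrite sumr_const -[_ *+ _]mulr_natl ler_wpM2r ?exprn_ge0 ?(le_trans ler01) //.
  rewrite ler_nat (leq_trans _ (loc o)) //; apply: subset_leq_card; exact: subsetDl.
have [I [sI hI cI]] := greedy Psym Hdeg.
exists S, #|I|, k; split.
- by rewrite -ltnS.
- apply: (@le_trans _ _ (\sum_j (fan j)%:R)); last by rewrite -natr_sum ler_nat sum_fan_le.
  rewrite mulrC mulr_natr -sumr_const.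
  apply: (@le_trans _ _ (\sum_(j in S) (fan j)%:R)).
    by apply: ler_sum => j; rewrite inE.
  rewrite [X in _ <= X](bigID (fun j => j \in S)) /= lerDl sumr_ge0 //.
- apply: (@le_trans _ _ ((d.+1)%:R * #|G|%:R)).
    by rewrite -natrM ler_nat.
  by rewrite -mulrA ler_wpM2l.
- move=> rho; split; first exact: local_restrict.
  exists I; split => // o1 o2 h1 h2 neq.
  have := hI o1 o2 h1 h2 neq; rewrite /P negbK -!setI_eq0 => /eqP dis.
  apply/eqP/setP => x; rewrite [in RHS]inE inE; apply/negP => /andP[x1 x2].
  have := Idep_restrict x1; have := Idep_restrict x2 => y2 y1.
  have : val x \in set0 by rewrite -dis inE y1 y2.
  by rewrite in_set0.
Qed.
End Comb.
Local Open Scope ring_scope.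

Lemma near (R : realFieldType) (N : nat) (x : R) :
  0 <= x -> x <= N%:R -> exists k : nat, `|x - k%:R| <= 1/2.
Proof.
elim: N x => [|N IH] x x0 xN.
  by exists 0%N; rewrite subr0 ger0_norm //; lra.
have [xN'|xN'] := lerP x N%:R; first exact: IH.
rewrite -natr1 in xN.
have [h|h] := lerP x (N%:R + 1/2).
  by exists N; rewrite ler_distl; apply/andP; split; lra.
by exists N.+1; rewrite -natr1 ler_distl; apply/andP; split; lra.
Qed.

Lemma e_bound (R : realFieldType) (gamma e : R) (d : nat) :
  0 <= gamma -> gamma <= 1 -> is_err gamma d e -> e * 2 ^+ d.+1 <= 1.
Proof.
move=> g0 g1 [_ H].
have p0 : 0 < (2 : R) ^+ d by rewrite exprn_gt0.
have hx : gamma * 2 ^+ d <= (2 ^ d)%:R by rewrite natrX ler_piMl // ltW.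
have [k hk] := @near R (2 ^ d) (gamma * 2 ^+ d) (mulr_ge0 g0 (ltW p0)) hx.
have := H (Posz k); rewrite -pmulrn => He.
have E : gamma - k%:R / 2%:R ^+ d = (gamma * 2 ^+ d - k%:R) / 2 ^+ d.
  by field; rewrite gt_eqF.
have pi : 0 < ((2 : R) ^+ d)^-1 by rewrite invr_gt0.
rewrite E normrM (gtr0_norm pi) in He.
rewrite exprS mulrA.
have : e * 2 ^+ d <= `|gamma * 2 ^+ d - k%:R| by rewrite -ler_pdivlMr.
lra.
Qed.

Theorem mainTheorem4 (R : realFieldType) (gamma : R) (d m n : nat) (e : R)
  (f : {ffun 'I_m -> bool} -> {ffun 'I_n -> bool}) :
  0 <= gamma -> gamma <= 1 -> (1 <= d)%N ->
  is_err gamma d e -> 0 < e ->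
  local d f ->
  exists (S : {set 'I_m}) (r : nat),
    [/\ #|S|%:R <= e ^+ 2 * r%:R / 4,
        n%:R * (e ^+ 2 / (16 * d%:R)) ^+ (2 * d + 1) <= r%:R
      & forall rho : {ffun {j : 'I_m | j \in S} -> bool},
          local_dr d r (restrict f rho)].
Proof.
move=> g0 g1 d1 herr e0 loc.
have eb := e_bound g0 g1 herr.
have d0 : (0 : R) < d%:R by rewrite ltr0n.
have d1R : (1 : R) <= d%:R by rewrite ler1n.
have e20 : 0 < e ^+ 2 by rewrite exprn_gt0.
have Hde : (d.+1)%:R * e ^+ 2 <= 1.
  have h4 : (d.+1)%:R <= (4 : R) ^+ d.+1.
    rewrite -natrX ler_nat; apply: ltnW; apply: ltn_expl => //.
  have : (e * 2 ^+ d.+1) ^+ 2 <= 1.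
    by rewrite expr_le1 // mulr_ge0 // ?exprn_ge0 // ltW.
  rewrite exprMn -exprM mulnC exprM => h.
  have h2 : (2 : R) ^+ 2 = 4 by rewrite expr2; lra.
  rewrite h2 in h; apply: le_trans h; rewrite mulrC ler_wpM2l // ltW //.
have dd1 : (1 : R) <= (d.+1)%:R by rewrite ler1n.
have e21 : e ^+ 2 <= 1.
  by apply: le_trans Hde; rewrite -[X in X <= _]mul1r ler_wpM2r // ltW.
pose q : R := 8 * d%:R ^+ 2 * (d.+1)%:R / e ^+ 2.
have q1 : 1 <= q.
  rewrite /q ler_pdivlMr // mul1r; apply: le_trans e21 _.
  have : 1 <= d%:R ^+ 2 :> R by rewrite exprn_ege1.
  nra.
have qdef : q = 8 * d%:R ^+ 2 * (d.+1)%:R / e ^+ 2 by [].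
clearbody q.
have [S [r [k [hk ha hb hloc]]]] := comb q1 d1 loc.
exists S, r; split => //.
- set a := q ^+ k.
  have a1 : 1 <= a by rewrite exprn_ege1.
  rewrite exprSr natrM -/a in ha.
  have h1 : 1 + d%:R * a <= 2 * d%:R * a by nra.
  have r0 : (0 : R) <= r%:R by [].
  have s0 : (0 : R) <= #|S|%:R by [].
  have h2 : n%:R <= (d.+1)%:R * (2 * d%:R * a) * r%:R.
    apply: le_trans hb _; apply: ler_wpM2r => //; apply: ler_wpM2l => //.
  have h3 : a * (#|S|%:R * q) <= a * (2 * d%:R ^+ 2 * (d.+1)%:R * r%:R).
    have : #|S|%:R * (a * q) <= n%:R * d%:R by [].
    have : n%:R * d%:R <= (d.+1)%:R * (2 * d%:R * a) * r%:R * d%:R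
      by apply: ler_wpM2r => //; apply: ltW.
    rewrite expr2; nra.
  rewrite ler_pM2l ?(lt_le_trans ltr01 a1) // in h3.
  have hq : #|S|%:R * q = #|S|%:R * (8 * d%:R ^+ 2 * (d.+1)%:R) / e ^+ 2 by rewrite qdef; field; rewrite gt_eqF.
  rewrite hq ler_pdivrMr // in h3.
  have p0 : 0 < 8 * d%:R ^+ 2 * (d.+1)%:R :> R.
    by rewrite !mulr_gt0 // ?exprn_gt0 // ltr0n.
  rewrite -(ler_pM2r p0).
  apply: (le_trans h3); rewrite le_eqVlt; apply/orP; left; apply/eqP; by field.
- set b := q ^+ k.
  have a1 : 1 <= b by rewrite exprn_ege1.
  have aq : b <= q ^+ d by apply: ler_weXn2l.
  have h1 : 1 + d%:R * b <= 2 * d%:R * q ^+ d by nra.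
  have r0 : (0 : R) <= r%:R by [].
  have hK : n%:R <= (d.+1)%:R * (2 * d%:R * q ^+ d) * r%:R.
    apply: le_trans hb _; apply: ler_wpM2r => //; apply: ler_wpM2l => //.
  pose c := e ^+ 2 / (16 * d%:R).
  have cdef : c = e ^+ 2 / (16 * d%:R) by [].
  rewrite -/c; clearbody c.
  have c0 : 0 <= c by rewrite cdef divr_ge0 // ?(ltW e20) // ?mulr_ge0 // ltW.
  have E1 : (d.+1)%:R * (2 * d%:R * q ^+ d) * c ^+ (2 * d + 1)
      = ((d.+1)%:R * e ^+ 2 / 8) * ((d.+1)%:R * e ^+ 2 / 32) ^+ d.
    rewrite addn1 exprS exprM.
    have -> : (d.+1)%:R * e ^+ 2 / 32 = q * c ^+ 2.
      by rewrite qdef cdef; field; rewrite ?gt_eqF.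
    rewrite exprMn.
    have -> : (d.+1)%:R * e ^+ 2 / 8 = (d.+1)%:R * 2 * d%:R * c.
      by rewrite cdef; field; rewrite gt_eqF.
    rewrite exprMn -exprM mulnC exprM expr2; ring.
  have KC : (d.+1)%:R * (2 * d%:R * q ^+ d) * c ^+ (2 * d + 1) <= 1.
    rewrite E1; apply: mulr_ile1.
    + by rewrite divr_ge0 // mulr_ge0 // ltW.
    + by rewrite exprn_ge0 // divr_ge0 // mulr_ge0 // ltW.
    + lra.
    + apply: exprn_ile1; first by rewrite divr_ge0 // mulr_ge0 // ltW.
      lra.
  have cp : 0 <= c ^+ (2 * d + 1) by rewrite exprn_ge0.
  apply: le_trans (ler_wpM2r cp hK) _.
  rewrite mulrAC; apply: le_trans (ler_wpM2r r0 KC) _.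
  by rewrite mul1r.
Qed.
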